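(* Consider the secure distributed linearly separable computation problem with parameters $(\mathsf K,\mathsf N,\mathsf N_{\rm r},\mathsf K_{\rm c},\mathsf M)$ where $\mathsf K_{\rm c}=1$ and $\mathsf M=\frac{\mathsf K}{\mathsf N}(\mathsf N-\mathsf N_{\rm r}+1)$. Then the optimal communication cost is $\mathsf R^\star=\mathsf N_{\rm r}$.
   Context: Problem setting. $\mathsf K,\mathsf N,\mathsf N_{\rm r},\mathsf M$ are positive integers with $\mathsf N_{\rm r}\le \mathsf N$ and $\mathsf N$ dividing $\mathsf K$. Fix a prime power $\mathsf q$ (assumed sufficiently large) and a positive integer $\mathsf L$. There are $\mathsf K$ independent datasets $D_1,\dots,D_{\mathsf K}$; the message $W_k=f_k(D_k)\in\mathbb F_{\mathsf q}^{\mathsf L}$, and $W_1,\dots,W_{\mathsf K}$ are mutually independent, each uniformly distributed over $\mathbb F_{\mathsf q}^{\mathsf L}$. Since $\mathsf K_{\rm c}=1$, the user wants $W_1+\cdots+W_{\mathsf K}$. A (secure) scheme consists of: (i) an assignment $\mathbf Z=(\mathcal Z_1,\dots,\mathcal Z_{\mathsf N})$ with $\mathcal Z_n\subseteq[\mathsf K]$ and $|\mathcal Z_n|\le \mathsf M$ (server $n$ receives the datasets indexed by $\mathcal Z_n$); (ii) a random variable $Q$ on a finite set, independent of $(D_1,\dots,D_{\mathsf K})$, given to every server but not to the user; (iii) each server $n$ sends $X_n=\psi_n(\{W_k:k\in\mathcal Z_n\},Q)\in\mathbb F_{\mathsf q}^{\mathsf T_n}$; (iv) decodability: for every $\mathcal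 A\subseteq[\mathsf N]$ with $|\mathcal A|=\mathsf N_{\rm r}$ there is a function $\phi_{\mathcal A}$ with $\phi_{\mathcal A}(\{X_n:n\in\mathcal A\})=W_1+\cdots+W_{\mathsf K}$; (v) security: $I(W_1,\dots,W_{\mathsf K};X_1,\dots,X_{\mathsf N}\mid W_1+\cdots+W_{\mathsf K})=0$. The communication cost is $\mathsf R=\max_{\mathcal A\subseteq[\mathsf N],|\mathcal A|=\mathsf N_{\rm r}}\sum_{n\in\mathcal A}\mathsf T_n/\mathsf L$, and $\mathsf R^\star$ is the minimum of $\mathsf R$ over all such secure schemes. *)

(* Defs.v *)
From HB Require Import structures.
From mathcomp Require Import all_boot all_order all_algebra all_field.
From mathcomp Require Import all_classical all_reals all_analysis.
Set Implicit Arguments. Unset Strict Implicit. Unset Printing Implicit Defensive.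
Import Order.TTheory GRing.Theory Num.Theory.
Local Open Scope ring_scope.

Section InfoTheory.
Variable R : realType.

Definition probE (Om : finType) (P : Om -> R) (E : pred Om) : R :=
  \sum_(o : Om | E o) P o.

Definition cond_mutual_info (Om : finType) (P : Om -> R)
  (TA TB TC : eqType) (A : Om -> TA) (B : Om -> TB) (C : Om -> TC) : R :=
  \sum_(o : Om) P o *
    ln ((probE P (fun o' => [&& A o' == A o, B o' == B o & C o' == C o])
          * probE P (fun o' => C o' == C o))
        / (probE P (fun o' => (A o' == A o) && (C o' == C o))
          * probE P (fun o' => (B o' == B o) && (C o' == C o)))).
End InfoTheory.

Section Scheme.
Variables (R : realType) (F : finFieldType) (K N Nr M L : nat).

Definition msgs := {ffun 'I_K -> 'rV[F]_L}.

Definition msg_sum (w : msgs) : 'rV[F]_L := \sum_(k < K) w k.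

Definition answers (S : finType) (T : 'I_N -> nat)
  (psi : forall n : 'I_N, msgs -> S -> 'rV[F]_(T n)) (ws : msgs * S)
  : {dffun forall n : 'I_N, 'rV[F]_(T n)} :=
  finfun (fun n => psi n ws.1 ws.2).

(* joint pmf of (W, Q): W uniform on (F^L)^K, independent of Q *)
Definition joint_pmf (S : finType) (pQ : S -> R) (ws : msgs * S) : R :=
  pQ ws.2 / (#|F| ^ (K * L))%:R.

Definition secure_scheme (S : finType) (pQ : S -> R)
  (Z : 'I_N -> {set 'I_K}) (T : 'I_N -> nat)
  (psi : forall n : 'I_N, msgs -> S -> 'rV[F]_(T n)) : Prop :=
  (forall s, 0 <= pQ s) /\ (\sum_(s : S) pQ s = 1) /\
  (forall n, #|Z n| <= M)%N /\
  (forall n (w w' : msgs) (s : S),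
      (forall k, k \in Z n -> w k = w' k) -> psi n w s = psi n w' s) /\
  (* (iv) decodability from any N_r servers (almost surely, i.e. on the
     support of Q; W is uniform so every w has positive probability) *)
  (forall A : {set 'I_N}, #|A| = Nr ->
     exists phi : (forall n : 'I_N, 'rV[F]_(T n)) -> 'rV[F]_L,
       forall (w : msgs) (s : S), 0 < pQ s ->
         phi (fun n => if n \in A then psi n w s else 0) = msg_sum w) /\
  cond_mutual_info (joint_pmf pQ) (fun ws : msgs * S => ws.1)
     (answers psi) (fun ws : msgs * S => msg_sum ws.1) = 0.

Definition comm_cost (T : 'I_N -> nat) : R :=
  (\max_(A : {set 'I_N} | #|A| == Nr) \sum_(n in A) T n)%N%:R / L%:R.
End Scheme.

(* Main.v *)
Require Import Defs.
From HB Require Import structures.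
From mathcomp Require Import all_boot all_order all_algebra all_field.
From mathcomp Require Import all_classical all_reals all_analysis.
From mathcomp Require Import zify.
Import Order.TTheory GRing.Theory Num.Theory.
Local Open Scope ring_scope.

Section Lag.
Variables (F : fieldType) (I : finType).

Lemma lagrange_exists (A : {set I}) (x : I -> F) (b : F) :
  {in A &, injective x} -> exists a : I -> F, forall p : {poly F},
  (size p <= #|A|)%N -> p.[b] = \sum_(n in A) p.[x n] * a n.
Proof.
move=> xinj.
pose l n := (\prod_(m <- enum (A :\ n)) (x n - x m))^-1 *:
              \prod_(m <- enum (A :\ n)) ('X - (x m)%:P).
exists (fun n => (l n).[b]) => p hs.
have le n m : n \in A -> m \in A -> (l n).[x m] = (n == m)%:R.
  move=> nA mA; rewrite /l hornerZ horner_prod.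
  case: eqP => [->|nm].
    rewrite [X in _ * X](eq_bigr (fun j => x m - x j)) => [|j _]; last by rewrite hornerXsubC.
    rewrite mulVf //; rewrite prodf_seq_neq0; apply/allP => j; rewrite mem_enum.
    rewrite !inE => /andP [jm jA]; rewrite subr_eq0; apply/eqP => h.
    by move: jm; rewrite (xinj _ _ mA jA h) eqxx.
  rewrite [X in _ * X](big_rem m) /=; last by rewrite mem_enum !inE mA andbT; apply/eqP => h; apply: nm.
  by rewrite hornerXsubC subrr mul0r mulr0.
have sl n : n \in A -> (size (l n) <= #|A|)%N.
  move=> nA; apply: (leq_trans (size_scale_leq _ _)).
  by rewrite size_prod_XsubC -cardE (cardsD1 n A) nA.
pose q := p - \sum_(n in A) p.[x n] *: l n.
have q0 : q = 0.
  apply/eqP; apply: contraT => qn0.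
  have hsq : (size q <= #|A|)%N.
    rewrite /q; apply: (leq_trans (size_polyD _ _)); rewrite geq_max size_polyN hs /=.
    apply: (big_ind (fun r : {poly F} => (size r <= #|A|)%N)) => //.
    - by rewrite size_poly0.
    - by move=> r1 r2 h1 h2; apply: (leq_trans (size_polyD _ _)); rewrite geq_max h1 h2.
    - by move=> n nA; apply: (leq_trans (size_scale_leq _ _)); apply: sl.
  have hr : all (root q) [seq x n | n <- enum A].
    apply/allP => y /mapP [j]; rewrite mem_enum => jA ->.
    rewrite /root /q hornerD hornerN horner_sum (bigD1 j) //= hornerZ le // eqxx mulr1.
    rewrite big1 ?addr0 ?subrr // => n /andP [nA nj].
    by rewrite hornerZ le // (negbTE nj) mulr0.
  have hu : uniq [seq x n | n <- enum A].
    by rewrite map_inj_in_uniq ?enum_uniq // => u v; rewrite !mem_enum; apply: xinj.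
  by have := max_poly_roots qn0 hr hu; rewrite size_map -cardE ltnNge hsq.
have : q.[b] = 0 by rewrite q0 horner0.
rewrite /q hornerD hornerN horner_sum => /eqP; rewrite subr_eq0 => /eqP ->.
by apply: eq_bigr => n _; rewrite hornerZ.
Qed.
End Lag.

Section Design.
Variables (K N' Nr : nat).
Hypotheses (hNr : (0 < Nr)%N) (NrN : (Nr <= N'.+1)%N) (NK : (N'.+1 %| K)%N).
Local Notation N := N'.+1.

Definition grp (k : 'I_K) : 'I_N := Ordinal (ltn_pmod k (ltn0Sn N')).
Definition stores (n : 'I_N) (k : 'I_K) : bool := (val (n - grp k)%R <= N - Nr)%N.
Definition Zs (n : 'I_N) : {set 'I_K} := [set k | stores n k].
Definition NS (k : 'I_K) : {set 'I_N} := [set n | ~~ stores n k].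

Lemma grp_inj n (k1 k2 : 'I_K) : n - grp k1 = n - grp k2 -> grp k1 = grp k2.
Proof. by move/addrI/oppr_inj. Qed.

Lemma cardZs n : (#|Zs n| <= K %/ N * (N - Nr + 1))%N.
Proof.
set P := (N - Nr + 1)%N.
have P0 : (0 < P)%N by rewrite /P addn1.
pose code (k : 'I_K) := (k %/ N * P + val (n - grp k)%R)%N.
rewrite cardE -(size_map code) -(size_iota 0 (K %/ N * P)).
apply: uniq_leq_size.
  rewrite map_inj_in_uniq ?enum_uniq // => k1 k2; rewrite !mem_enum !inE /stores => h1 h2 hc.
  have d1 : (val (n - grp k1)%R < P)%N by rewrite /P addn1 ltnS.
  have d2 : (val (n - grp k2)%R < P)%N by rewrite /P addn1 ltnS.
  have hq : (k1 %/ N = k2 %/ N)%N.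
    by move: (congr1 (divn^~ P) hc); rewrite /code !divnMDl // (divn_small d1) (divn_small d2) !addn0.
  have hd : val (n - grp k1) = val (n - grp k2).
    by move: (congr1 (modn^~ P) hc); rewrite /code /= !modnMDl (modn_small d1) (modn_small d2).
  have hg := @grp_inj n k1 k2 (val_inj hd).
  apply: val_inj; rewrite /= (divn_eq k1 N) (divn_eq k2 N) hq.
  by move: (congr1 val hg) => /= ->.
move=> c /mapP [k]; rewrite mem_enum inE /stores => hk ->.
rewrite mem_iota add0n /code.
have hk' : (k %/ N < K %/ N)%N by by rewrite ltn_divLR // divnK.
apply: (@leq_trans ((k %/ N).+1 * P)%N).
  by rewrite mulSnr ltn_add2l /P addn1 ltnS.
by rewrite leq_mul2r hk' orbT.
Qed.

Lemma cardNS k : (#|NS k| <= Nr.-1)%N.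
Proof.
pose code (n : 'I_N) := (val (n - grp k)%R - (N - Nr + 1))%N.
rewrite cardE -(size_map code) -(size_iota 0 Nr.-1).
apply: uniq_leq_size.
  rewrite map_inj_in_uniq ?enum_uniq // => n1 n2; rewrite !mem_enum !inE /stores -!ltnNge => h1 h2 hc.
  have hd : val (n1 - grp k) = val (n2 - grp k).
    move: h1 h2 hc; rewrite /code; set d1 := val (n1 - grp k); set d2 := val (n2 - grp k); lia.
  exact: (addIr _ (val_inj hd)).
move=> c /mapP [n]; rewrite mem_enum inE /stores -ltnNge => hn ->.
rewrite mem_iota add0n /code.
have hlt : (val (n - grp k)%R < N)%N := ltn_ord _.
move: hn hlt; set d := val (n - grp k); move: NrN hNr; lia.
Qed.

End Design.

Section Sec.
Variables (F : finFieldType) (K L : nat).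
Local Notation msgs := (msgs F K L).

Lemma msg_sumD (w w' : msgs) : msg_sum (w + w') = msg_sum w + msg_sum w'.
Proof. by rewrite /msg_sum -big_split; apply: eq_bigr => k _; rewrite ffunE. Qed.

Lemma msg_sumN (w : msgs) : msg_sum (- w) = - msg_sum w.
Proof. by rewrite /msg_sum -sumrN; apply: eq_bigr => k _; rewrite ffunE. Qed.

Lemma card_pair (P : pred (msgs * msgs)) :
  #|P| = (\sum_(w : msgs) \sum_(v : msgs) (P (w, v) : nat))%N.
Proof.
rewrite -sum1_card big_mkcond /= pair_big /=.
by apply: eq_bigr => -[a b] _; rewrite /= unfold_in; case: (P (a, b)).
Qed.

Lemma count_identity (B : eqType) (H : msgs -> B) (u : msgs -> msgs)
  (hu : forall v d, msg_sum d = 0 -> u (v + d) = u v + d)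
  (w0 : msgs) (x0 : B) :
  let s0 := msg_sum w0 in
  muln #|[pred o : msgs * msgs | [&& o.1 == w0, H (o.1 + u o.2) == x0 & msg_sum o.1 == s0]]|
    #|[pred o : msgs * msgs | msg_sum o.1 == s0]|
  = muln #|[pred o : msgs * msgs | (o.1 == w0) && (msg_sum o.1 == s0)]|
    #|[pred o : msgs * msgs | (H (o.1 + u o.2) == x0) && (msg_sum o.1 == s0)]|.
Proof.
move=> s0.
pose n (w : msgs) := (\sum_(v : msgs) (H (w + u v)%R == x0 : nat))%N.
have nw w : msg_sum w = s0 -> n w = n w0.
  move=> hw; rewrite /n (reindex_inj (addIr (w0 - w))) /=.
  apply: eq_bigr => v _; rewrite hu; last by rewrite msg_sumD msg_sumN hw /s0 subrr.
  by rewrite addrCA [w + _]addrC subrK addrC.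
pose C := (\sum_(v : msgs) 1)%N.
pose S := (\sum_(w : msgs) (msg_sum w == s0 : nat))%N.
rewrite !card_pair.
have e1 : (\sum_(w : msgs) \sum_(v : msgs)
     ([&& (w, v).1 == w0, H ((w, v).1 + u (w, v).2)%R == x0 & msg_sum (w, v).1 == s0] : nat))%N = n w0.
  rewrite (bigD1 w0) //= [X in (_ + X)%N]big1 ?addn0; last first.
    by move=> w /negbTE hw; apply: big1 => v _; rewrite hw.
  by apply: eq_bigr => v _; rewrite eqxx /s0 eqxx andbT.
have e2 : (\sum_(w : msgs) \sum_(v : msgs) (msg_sum (w, v).1 == s0 : nat))%N = (S * C)%N.
  rewrite /S big_distrl /=; apply: eq_bigr => w _.
  by rewrite big_distrr /=; apply: eq_bigr => v _; rewrite muln1.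
have e3 : (\sum_(w : msgs) \sum_(v : msgs) (((w, v).1 == w0) && (msg_sum (w, v).1 == s0) : nat))%N = C.
  rewrite (bigD1 w0) //= [X in (_ + X)%N]big1 ?addn0; last first.
    by move=> w /negbTE hw; apply: big1 => v _; rewrite hw.
  by apply: eq_bigr => v _; rewrite eqxx /s0 eqxx.
have e4 : (\sum_(w : msgs) \sum_(v : msgs) ((H ((w, v).1 + u (w, v).2)%R == x0) && (msg_sum (w, v).1 == s0) : nat))%N = (S * n w0)%N.
  rewrite /S big_distrl /=; apply: eq_bigr => w _.
  case: eqP => hw; last by rewrite mul0n; apply: big1 => v _; rewrite andbF.
  by rewrite mul1n -(nw w hw); apply: eq_bigr => v _; rewrite andbT.
rewrite e1 e2 e3 e4.
by rewrite mulnC [(S * _)%N]mulnC mulnA.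
Qed.
End Sec.

Lemma probE_const (R : realType) (Om : finType) (P : Om -> R) (d : R) (E : pred Om) :
  (forall o, P o = d) -> probE P E = d *+ #|E|.
Proof.
move=> hP; rewrite /probE (eq_bigr (fun=> d)) // -sumr_const.
by apply: eq_bigl => o; rewrite unfold_in.
Qed.

Lemma mulrn_prod (R : realType) (d : R) (a b : nat) : (d *+ a) * (d *+ b) = (d * d) *+ (a * b).
Proof. by rewrite mulrnAl mulrnAr -mulrnA mulnC. Qed.

Lemma ln_div_self (R : realType) (y : R) : ln (y / y) = 0.
Proof.
have [->|y0] := eqVneq y 0; first by rewrite mul0r ln0.
by rewrite divff // ln1.
Qed.

Section Sec2.
Variables (R : realType) (F : finFieldType) (K L N : nat).
Local Notation msgs := (msgs F K L).

Lemma cmi_zero (T : 'I_N -> nat) (psi : forall n : 'I_N, msgs -> msgs -> 'rV[F]_(T n))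
  (u : msgs -> msgs) (hu : forall v d, msg_sum d = 0 -> u (v + d) = u v + d)
  (Hf : msgs -> {dffun forall n : 'I_N, 'rV[F]_(T n)})
  (hB : forall w v, answers psi (w, v) = Hf (w + u v)) (c : R) :
  cond_mutual_info (joint_pmf (F:=F) (K:=K) (L:=L) (fun _ : msgs => c))
    (fun ws : msgs * msgs => ws.1) (answers psi) (fun ws => msg_sum ws.1) = 0.
Proof.
rewrite /cond_mutual_info; apply: big1 => -[w0 v0] _.
set d := c / (#|F| ^ (K * L))%:R.
have hP : forall o, joint_pmf (F:=F) (K:=K) (L:=L) (fun _ : msgs => c) o = d by [].
have hPE := fun E => @probE_const R _ _ d E hP.
rewrite !hPE /=.
rewrite (hB w0 v0).
set x0 := Hf (w0 + u v0).
have := @count_identity F K L _ Hf u hu w0 x0.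
set a := #|_|; set b := #|_|; set c3 := #|_|; set e := #|_|.
move=> hab.
have hab' : (a * b = c3 * e)%N.
  have -> : a = #|[pred o : msgs * msgs | [&& o.1 == w0, Hf (o.1 + u o.2) == x0 & msg_sum o.1 == msg_sum w0]]|.
    by rewrite /a; apply: eq_card => -[w v]; rewrite !unfold_in /= hB.
  have -> : e = #|[pred o : msgs * msgs | (Hf (o.1 + u o.2) == x0) && (msg_sum o.1 == msg_sum w0)]|.
    by rewrite /e; apply: eq_card => -[w v]; rewrite !unfold_in /= hB.
  exact: hab.
rewrite !mulrn_prod hab' ln_div_self mulr0 //.

Qed.
End Sec2.

Lemma subset_card_exists (T : finType) (B : {set T}) (k : nat) :
  (k <= #|B|)%N -> exists A : {set T}, A \subset B /\ #|A| = k.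
Proof.
move=> hk; exists [set x in take k (enum B)]; split.
  by apply/fintype.subsetP => x; rewrite inE => /mem_take; rewrite mem_enum.
rewrite cardsE; apply/eqP; move: (take_uniq k (enum_uniq (mem B))) => /card_uniqP ->.
by rewrite size_takel // -cardE.
Qed.

Lemma sum_lt (I : finType) (f g : I -> nat) (i0 : I) :
  (forall i, f i <= g i)%N -> (f i0 < g i0)%N -> (\sum_i f i < \sum_i g i)%N.
Proof.
move=> hle hlt; rewrite (bigD1 i0) //= [X in (_ < X)%N](bigD1 i0) //=.
have : (\sum_(i | i != i0) f i <= \sum_(i | i != i0) g i)%N by apply: leq_sum.
lia.
Qed.

Lemma sum_const_ord (K c : nat) : (\sum_(k < K) c = K * c)%N.
Proof. by rewrite big_const_ord iter_addn_0 mulnC. Qed.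

Lemma card_sum (T : finType) (A : {set T}) : #|A| = (\sum_x (x \in A : nat))%N.
Proof. by rewrite -sum1_card big_mkcond /=; apply: eq_bigr => x _; case: (x \in A). Qed.

Section Conv.
Variables (R : realType) (F : finFieldType) (K N Nr L : nat).
Hypotheses (hK : (0 < K)%N) (hN : (0 < N)%N) (hNr : (0 < Nr)%N) (NrN : (Nr <= N)%N)
  (NK : (N %| K)%N) (hL : (0 < L)%N).

Local Notation msgs := (msgs F K L).

Lemma msg_sum0 : msg_sum (0 : msgs) = 0.
Proof. by rewrite /msg_sum big1 // => k _; rewrite ffunE. Qed.

Definition wk (k : 'I_K) (v : 'rV[F]_L) : msgs := [ffun j => if j == k then v else 0].

Lemma msg_sum_wk k v : msg_sum (wk k v) = v.
Proof.
rewrite /msg_sum (bigD1 k) //= ffunE eqxx big1 ?addr0 // => j /negbTE hj.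
by rewrite ffunE hj.
Qed.

Lemma converse (S : finType) (pQ : S -> R) (Z : 'I_N -> {set 'I_K}) (T : 'I_N -> nat)
  (psi : forall n : 'I_N, msgs -> S -> 'rV[F]_(T n)) :
  secure_scheme Nr (K %/ N * (N - Nr + 1)) pQ Z psi -> Nr%:R <= comm_cost R Nr L T.
Proof.
case=> pQ0 [pQ1 [hZ [hloc [hdec _]]]].
have [s0 hs0] : exists s, 0 < pQ s.
  apply/existsP; apply: contraT => /existsPn h.
  have : \sum_s pQ s = 0.
    by apply: big1 => s _; apply/eqP; rewrite eq_le pQ0 andbT leNgt h.
  by rewrite pQ1 => /eqP; rewrite oner_eq0.
set P := (N - Nr + 1)%N.
set M := (K %/ N * P)%N.
have NM : (N * M = K * P)%N by rewrite /M mulnA [(N * _)%N]mulnC divnK.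
pose W k := [set n | k \in Z n].
have dc : (\sum_k #|W k| = \sum_n #|Z n|)%N.
  under eq_bigr do rewrite card_sum.
  rewrite exchange_big /=; apply: eq_bigr => n _; rewrite card_sum.
  by apply: eq_bigr => k _; rewrite inE.
have sZ : (\sum_n #|Z n| <= K * P)%N.
  by rewrite -NM -sum_const_ord; apply: leq_sum => n _; apply: hZ.
have hW : forall k, (P <= #|W k|)%N.
  move=> k; rewrite leqNgt; apply/negP => hlt.
  have hc : (Nr <= #|~: W k|)%N.
    have := cardsC (W k); rewrite card_ord /P in hlt *; lia.
  have [A [sA cA]] := @subset_card_exists _ _ _ hc.
  have [phi hphi] := hdec A cA.
  pose e : 'rV[F]_L := const_mx 1.
  have e0 : e != 0.
    apply/eqP => /matrixP /(_ 0 (Ordinal hL)); rewrite !mxE => /eqP; by rewrite oner_eq0.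
  have h1 := hphi (wk k e) s0 hs0; have h0 := hphi 0 s0 hs0.
  move: h1; rewrite msg_sum_wk.
  have -> : (fun n => if n \in A then psi n (wk k e) s0 else 0) =
            (fun n => if n \in A then psi n 0 s0 else 0).
    apply: functional_extensionality_dep => n; case: ifP => // nA.
    apply: hloc => j jZ; rewrite !ffunE; case: eqP => // ejk.
    move/fintype.subsetP: sA => /(_ n nA); rewrite !inE -ejk jZ //.
  by rewrite h0 msg_sum0 => he; move: e0; rewrite -he eqxx.
have hW' : forall k, #|W k| = P.
  move=> k; apply/eqP; rewrite eqn_leq hW andbT leqNgt; apply/negP => hlt.
  have := @sum_lt _ (fun _ => P) (fun k => #|W k|) k hW hlt.
  by rewrite sum_const_ord dc; lia.
have hZn : forall n, exists k, k \in Z n.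
  move=> n; apply/existsP; apply: contraT => /existsPn h.
  have Zn0 : #|Z n| = 0%N by apply/eqP; rewrite cards_eq0; apply/eqP/setP => k; rewrite inE; apply/negbTE.
  have M0 : (0 < M)%N.
    by rewrite /M /P muln_gt0 divn_gt0 // dvdn_leq // addn1.
  have := @sum_lt _ (fun n => #|Z n|) (fun _ => M) n hZ; rewrite Zn0 => /(_ M0).
  rewrite sum_const_ord NM -dc.
  have : (K * P <= \sum_k #|W k|)%N.
    by rewrite -sum_const_ord; apply: leq_sum => k _; rewrite hW'.
  lia.
have hT : forall n, (L <= T n)%N.
  move=> n; have [k kZ] := hZn n.
  have nW : n \in W k by rewrite inE.
  have cA : #|n |: ~: W k| = Nr.
    rewrite cardsU1 inE nW /=; have hx := cardsC (W k); rewrite card_ord hW' /P in hx; set x := #|~: W k| in hx *; move: NrN hNr; lia.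
  have [phi hphi] := hdec _ cA.
  pose f (v : 'rV[F]_L) := psi n (wk k v) s0.
  have finj : injective f.
    move=> v1 v2 hf.
    rewrite -(msg_sum_wk k v1) -(msg_sum_wk k v2) -(hphi _ _ hs0) -(hphi _ _ hs0).
    congr phi; apply: functional_extensionality_dep => m; case: ifP => // mA.
    have [->|mn] := eqVneq m n; first exact: hf.
    apply: hloc => j jZ; rewrite !ffunE; case: eqP => // ejk.
    move: mA; rewrite !inE (negbTE mn) /= -ejk jZ //.
  have := @leq_card _ _ f finj; rewrite !card_mx !mul1n leq_exp2l //.
  exact: card_finNzRing_gt1.
have hNrs : (Nr <= #|[set: 'I_N]|)%N by rewrite cardsT card_ord.
have [A0 [_ cA0]] := @subset_card_exists _ _ _ hNrs.
rewrite /comm_cost ler_pdivlMr ?ltr0n // -natrM ler_nat.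
apply: leq_trans (leq_bigmax_cond _ (_ : #|A0| == Nr)); last by rewrite cA0.
rewrite -cA0 -sum1_card big_distrl /=; apply: leq_sum => n _; rewrite mul1n; exact: hT.
Qed.
End Conv.

Section Ach.
Variables (R : realType) (F : finFieldType) (K N' Nr L : nat).
Hypotheses (hK : (0 < K)%N) (hNr : (0 < Nr)%N) (NrN : (Nr <= N'.+1)%N)
  (NK : (N'.+1 %| K)%N) (hL : (0 < L)%N) (hF : (N'.+2 <= #|F|)%N).
Local Notation N := N'.+1.
Local Notation msgs := (msgs F K L).

Definition ev (i : 'I_N'.+2) : F := enum_val (widen_ord hF i).
Lemma ev_inj : injective ev.
Proof. by move=> i j /enum_val_inj [] /val_inj. Qed.
Definition al (n : 'I_N) : F := ev (widen_ord (leqnSn N) n).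
Definition be : F := ev ord_max.
Lemma al_inj : injective al.
Proof. by move=> i j /ev_inj [] /val_inj. Qed.
Lemma be_al n : be - al n != 0.
Proof.
rewrite subr_eq0; apply/eqP => /ev_inj /(congr1 val) /= h.
by move: (ltn_ord n); rewrite -h ltnn.
Qed.

Definition pk (k : 'I_K) : {poly F} :=
  (\prod_(m <- enum (NS K N' Nr k)) (be - al m))^-1 *:
    \prod_(m <- enum (NS K N' Nr k)) ('X - (al m)%:P).
Definition G (n : 'I_N) (k : 'I_K) : F := (pk k).[al n].

Lemma G0 n k : k \notin Zs K N' Nr n -> G n k = 0.
Proof.
rewrite inE => hn; rewrite /G /pk hornerZ horner_prod.
rewrite [X in _ * X](big_rem n) /=; last by rewrite mem_enum inE.
by rewrite hornerXsubC subrr mul0r mulr0.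
Qed.

Lemma pk_be k : (pk k).[be] = 1.
Proof.
rewrite /pk hornerZ horner_prod.
rewrite [X in _ * X](eq_bigr (fun j => be - al j)) => [|j _]; last by rewrite hornerXsubC.
rewrite mulVf //; rewrite prodf_seq_neq0; apply/allP => j _; exact: be_al.
Qed.

Lemma size_pk k : (size (pk k) <= Nr)%N.
Proof.
apply: (leq_trans (size_scale_leq _ _)); rewrite size_prod_XsubC -cardE.
have := @cardNS K N' Nr hNr NrN NK k; lia.
Qed.

Lemma decode_coef (A : {set 'I_N}) : #|A| = Nr ->
  exists a : 'I_N -> F, forall k, \sum_(n in A) a n * G n k = 1.
Proof.
move=> cA; have [a ha] := @lagrange_exists F _ A al be (in2W al_inj).
exists a => k; rewrite -(pk_be k) (ha (pk k)); last by rewrite cA size_pk.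
by apply: eq_bigr => n _; rewrite mulrC.
Qed.

Definition k0 : 'I_K := Ordinal hK.
Definition uu (v : msgs) : msgs := [ffun k => v k - (if k == k0 then msg_sum v else 0)].

Lemma sum_ite (x : 'rV[F]_L) : \sum_(k < K) (if k == k0 then x else 0) = x.
Proof. by rewrite (bigD1 k0) //= ?eqxx big1 ?addr0 // => k /negbTE ->. Qed.

Lemma msg_sum_uu v : msg_sum (uu v) = 0.
Proof.
rewrite /msg_sum (eq_bigr (fun k => v k - (if k == k0 then msg_sum v else 0))) => [|k _]; last by rewrite ffunE.
by rewrite sumrB sum_ite subrr.
Qed.

Lemma uu_add v d : msg_sum d = 0 -> uu (v + d) = uu v + d.
Proof.
move=> hd; apply/ffunP => k; rewrite !ffunE msg_sumD hd addr0.
by rewrite addrAC.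
Qed.

Definition hh (n : 'I_N) (y : msgs) : 'rV[F]_L := \sum_k G n k *: y k.
Definition psi (n : 'I_N) (w v : msgs) : 'rV[F]_((fun _ : 'I_N => L) n) := hh n (w + uu v).
Definition pQ (v : msgs) : R := ((#|F| ^ (K * L))%:R)^-1.

Lemma achieve : secure_scheme Nr (K %/ N * (N - Nr + 1)) pQ (Zs K N' Nr) psi /\
  comm_cost R Nr L (fun _ : 'I_N => L) = Nr%:R.
Proof.
have F1 : (1 < #|F|)%N := card_finNzRing_gt1 _.
have cq : ((#|F| ^ (K * L))%:R : R) != 0.
  by rewrite pnatr_eq0 -lt0n expn_gt0 (ltnW F1).
split; last first.
  rewrite /comm_cost.
  have -> : (\max_(A : {set 'I_N} | #|A| == Nr) \sum_(n in A) L = Nr * L)%N.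
    apply/eqP; rewrite eqn_leq; apply/andP; split.
      by apply/bigmax_leqP => A /eqP cA; rewrite sum_nat_const cA.
    have hNrs : (Nr <= #|[set: 'I_N]|)%N by rewrite cardsT card_ord.
    have [A0 [_ cA0]] := @subset_card_exists _ _ _ hNrs.
    by apply: leq_trans (leq_bigmax_cond A0 _); rewrite ?cA0 // sum_nat_const cA0.
  by rewrite natrM mulfK // pnatr_eq0 -lt0n hL.
split; first by move=> s; rewrite /pQ invr_ge0 ler0n.
split.
  rewrite /pQ sumr_const card_ffun card_mx card_ord mul1n -expnM [(L * K)%N]mulnC -[X in X = 1]mulr_natr mulVf //.
split; first by move=> n; exact: cardZs.
split.
  move=> n w w' s hw; rewrite /psi /hh; apply: eq_bigr => k _; rewrite !ffunE.
  by case: (boolP (k \in Zs K N' Nr n)) => hk; [rewrite hw | rewrite G0 // !scale0r].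
split.
  move=> A cA; have [a ha] := decode_coef A cA.
  exists (fun y => \sum_(n in A) a n *: y n) => w s _.
  rewrite (eq_bigr (fun n => a n *: hh n (w + uu s))) => [|n nA]; last by rewrite nA.
  transitivity (msg_sum (w + uu s)); last by rewrite msg_sumD msg_sum_uu addr0.
  rewrite /hh; under eq_bigr do rewrite scaler_sumr.
  rewrite exchange_big /=; apply: eq_bigr => k _.
  under eq_bigr do rewrite scalerA.
  by rewrite -scaler_suml ha scale1r.
apply: (@cmi_zero R F K L N (fun _ => L) psi uu uu_add
          (fun y => finfun (fun n => hh n y)) _ (((#|F| ^ (K * L))%:R)^-1)).
by [].
Qed.
End Ach.

Theorem theorem1 (R : realType) (K N Nr L : nat) :
  (0 < K)%N -> (0 < N)%N -> (0 < Nr)%N -> (Nr <= N)%N -> (N %| K)%N ->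
  (0 < L)%N ->
  exists q0 : nat, forall F : finFieldType, (q0 <= #|F|)%N ->
    let M := (K %/ N * (N - Nr + 1))%N in
    (* R* = N_r : N_r is attained by a secure scheme ... *)
    (exists (S : finType) (pQ : S -> R) (Z : 'I_N -> {set 'I_K})
            (T : 'I_N -> nat)
            (psi : forall n : 'I_N, msgs F K L -> S -> 'rV[F]_(T n)),
        secure_scheme Nr M pQ Z psi /\ comm_cost R Nr L T = Nr%:R) /\
    (* ... and no secure scheme has smaller cost *)
    (forall (S : finType) (pQ : S -> R) (Z : 'I_N -> {set 'I_K})
            (T : 'I_N -> nat)
            (psi : forall n : 'I_N, msgs F K L -> S -> 'rV[F]_(T n)),
        secure_scheme Nr M pQ Z psi -> Nr%:R <= comm_cost R Nr L T).
Proof.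
move=> hK hN hNr NrN NK hL; exists N.+1 => F hF M.
split; last first.
  move=> S pQ Z T psi hs; exact: (@converse R F K N Nr L hK hN hNr NrN NK hL _ _ _ _ _ hs).
rewrite /M; clear M.
case: N hN NrN NK hF => [//|N'] _ NrN NK hF.
do 5 eexists; exact: (@achieve R F K N' Nr L hK hNr NrN NK hL hF).
Qed.
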